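(* Let $(A,\gamma)$ be a quasiordered set, $(X,\rho)$ a partially ordered set, and $f:A\to X$ a map such that for all $x,y\in A$, $(x,y)\in\gamma$ if and only if $(f(x),f(y))\in\rho$. Let $(X_1^{(i)})_{i\in I}$ be subsets of $X$ with $\gamma\cap\ker(f)\subseteq\ker_{X_1^{(i)}}(f)$ for all $i\in I$, and let $\{R_i\mid i\in I\}$ be linear extensions of $\rho$ with $\bigcap_{i\in I}R_i=\rho$. Then $$\bigcap_{i\in I}\bigl(\ker_{X_1^{(i)}}(f)\cup f^{-1}(R_i)\bigr)=\gamma,$$ and each $\ker_{X_1^{(i)}}(f)\cup f^{-1}(R_i)$ is a half-space on $A$. In particular, if $\kappa:A\to A/(\gamma\cap\gamma^{-1})$ is the canonical surjection and $\{R_i\mid i\in I\}$ are linear extensions of $r_\gamma$ with $\bigcap_{i\in I}R_i=r_\gamma$, then $\bigcap_{i\in I}\bigl((\gamma\cap\gamma^{-1})\cup\kappa^{-1}(R_i)\bigr)=\gamma$.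
   Context: A quasiorder on $A$ is a reflexive and transitive relation; $\Delta_A=\{(a,a)\mid a\in A\}$. A quasiorder $\alpha$ on $A$ is a half-space if there is a quasiorder $\beta$ on $A$ with $\alpha\cup\beta=A\times A$ and $\alpha\cap\beta=\Delta_A$. For $f:A\to X$, $X_1\subseteq X$ and a linear order $R$ on $X$ (strict part $<_R$): $\ker(f)=\{(a,b)\mid f(a)=f(b)\}$, $\ker_{X_1}(f)=\Delta_A\cup\{(a,b)\mid f(a)=f(b)\in X_1\}$, $f^{-1}(R)=\Delta_A\cup\{(a,b)\mid f(a)<_Rf(b)\}$. For a quasiorder $\gamma$, $r_\gamma$ is the induced partial order on $A/(\gamma\cap\gamma^{-1})$: $([a],[b])\in r_\gamma$ iff $(a,b)\in\gamma$. *)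

(* Defs.v *)
Definition rel (T : Type) := T -> T -> Prop.

Definition quasiorder {T : Type} (r : rel T) : Prop :=
  (forall a, r a a) /\ (forall a b c, r a b -> r b c -> r a c).

Definition partial_order {T : Type} (r : rel T) : Prop :=
  quasiorder r /\ (forall a b, r a b -> r b a -> a = b).

Definition linear_order {T : Type} (r : rel T) : Prop :=
  partial_order r /\ (forall a b, r a b \/ r b a).

Definition linear_extension {T : Type} (rho R : rel T) : Prop :=
  linear_order R /\ (forall a b, rho a b -> R a b).

Definition diag {T : Type} : rel T := fun a b => a = b.

Definition strict {T : Type} (R : rel T) : rel T := fun x y => R x y /\ x <> y.

Definition kerf {A X : Type} (f : A -> X) : rel A := fun a b => f a = f b.

Definition ker_on {A X : Type} (X1 : X -> Prop) (f : A -> X) : rel A :=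
  fun a b => a = b \/ (f a = f b /\ X1 (f a)).

Definition preim {A X : Type} (f : A -> X) (R : rel X) : rel A :=
  fun a b => a = b \/ strict R (f a) (f b).

Definition half_space {A : Type} (alpha : rel A) : Prop :=
  quasiorder alpha /\
  exists beta : rel A, quasiorder beta /\
    (forall a b, alpha a b \/ beta a b) /\
    (forall a b, (alpha a b /\ beta a b) <-> a = b).

(* r_gamma on a quotient Q of A presented by the canonical surjection kappa *)
Definition r_of {A Q : Type} (kappa : A -> Q) (gamma : rel A) : rel Q :=
  fun p q => exists a b, kappa a = p /\ kappa b = q /\ gamma a b.

(* Main.v *)
Require Import Defs.
From Stdlib Require Import Classical.

Theorem proposition2p8 (A : Type) (gamma : A -> A -> Prop) (Hgamma : quasiorder gamma) :
  (forall (X : Type) (rho : X -> X -> Prop) (f : A -> X),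
     partial_order rho ->
     (forall x y, gamma x y <-> rho (f x) (f y)) ->
     forall (I : Type) (X1 : I -> X -> Prop) (R : I -> X -> X -> Prop),
     (forall i a b, gamma a b /\ kerf f a b -> ker_on (X1 i) f a b) ->
     (forall i, linear_extension rho (R i)) ->
     (forall x y, (forall i, R i x y) <-> rho x y) ->
     (forall a b, (forall i, ker_on (X1 i) f a b \/ preim f (R i) a b) <-> gamma a b) /\
     (forall i, half_space (fun a b => ker_on (X1 i) f a b \/ preim f (R i) a b)))
  /\
  (forall (Q : Type) (kappa : A -> Q),
     (forall q, exists a, kappa a = q) ->
     (forall a b, kappa a = kappa b <-> (gamma a b /\ gamma b a)) ->
     forall (I : Type) (R : I -> Q -> Q -> Prop),
     (forall i, linear_extension (r_of kappa gamma) (R i)) ->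
     (forall p q, (forall i, R i p q) <-> r_of kappa gamma p q) ->
     forall a b, (forall i, (gamma a b /\ gamma b a) \/ preim kappa (R i) a b) <-> gamma a b).
Proof.
  destruct Hgamma as [Hrefl Htrans].
  split.
  - intros X rho f [[rrefl rtrans] ranti] Hgf I X1 R Hker Hlin HR.
    split.
    + intros a b; split.
      * intros H.
        destruct (classic (f a = f b)) as [E|E].
        { apply Hgf. rewrite E. apply rrefl. }
        destruct (classic (a = b)) as [->|nab]; [apply Hrefl|].
        apply Hgf, HR. intros i.
        destruct (H i) as [[K|[K _]]|[K|[K _]]]; tauto.
      * intros H i.
        destruct (classic (f a = f b)) as [E|E].
        { left. apply Hker. split; assumption. }
        right. right. split; [|exact E].
        destruct (Hlin i) as [_ Hsub]. apply Hsub, Hgf, H.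
    + intros i.
      destruct (Hlin i) as [[[[Rr Rt] Ra] Rtot] _].
      unfold half_space, ker_on, preim, strict.
      split.
      * split; [intros; auto|].
        intros a b c H1 H2.
        destruct H1 as [[->|[E1 X1a]]|[->|[R1 N1]]]; auto;
        destruct H2 as [[->|[E2 X2]]|[->|[R2 N2]]]; auto.
        -- left; right. split; [congruence|auto].
        -- right; right. rewrite E1. auto.
        -- right; right. rewrite <- E2. auto.
        -- right; right. split; [eapply Rt; eauto|].
           intro E. rewrite <- E in R2. apply N1. apply Ra; auto.
      * exists (fun a b => a = b \/ (f a = f b /\ ~ X1 i (f a)) \/ (R i (f b) (f a) /\ f b <> f a)).
        split; [split|split].
        -- intros; auto.
        -- intros a b c H1 H2.
           destruct H1 as [->|[[E1 X1a]|[R1 N1]]]; auto;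
           destruct H2 as [->|[[E2 X2]|[R2 N2]]]; auto.
           ++ right; left. split; [congruence|auto].
           ++ right; right. rewrite E1. auto.
           ++ right; right. rewrite <- E2. auto.
           ++ right; right. split; [eapply Rt; eauto|].
              intro E. rewrite E in R2. apply N1. apply Ra; auto.
        -- intros a b.
           destruct (classic (a = b)) as [->|nab]; [auto|].
           destruct (classic (f a = f b)) as [E|E].
           ++ destruct (classic (X1 i (f a))); [left; left; right; auto|right; right; left; auto].
           ++ destruct (Rtot (f a) (f b)); [left; right; right; auto|right; right; right; split; auto].
        -- intros a b; split; [|intros ->; split; auto].
           intros [[[?|[E1 X1a]]|[?|[R1 N1]]] [?|[[E2 X2]|[R2 N2]]]]; auto; try tauto;
             try congruence.
           exfalso. apply N1. apply Ra; auto.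
  - intros Q kappa Hsurj Hk I R Hlin HR a b; split.
    + intros H.
      destruct (classic (gamma a b)) as [G|G]; [exact G|].
      destruct (classic (a = b)) as [->|nab]; [apply Hrefl|].
      assert (Hr : r_of kappa gamma (kappa a) (kappa b)).
      { apply HR. intros i. destruct (H i) as [[G1 _]|[E|[Ri _]]]; tauto. }
      destruct Hr as [a' [b' [Ea [Eb G']]]].
      assert (g1 : gamma a a') by (apply (proj1 (Hk a a')); auto).
      assert (g2 : gamma b' b) by (apply (proj1 (Hk b' b)); auto).
      exfalso; apply G. eauto.
    + intros G i.
      destruct (classic (gamma b a)) as [G2|G2]; [left; auto|].
      right; right; split.
      * destruct (Hlin i) as [_ Hsub]. apply Hsub. exists a, b. auto.
      * intro E. apply G2. apply (proj1 (Hk a b) E).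
Qed.
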